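(* The dimension of $\sigma_r(\mathcal{M}_{n,d})$ is bounded above by the optimal value of the following integer linear program in the variables $c_1,\ldots,c_d\in\mathbb{Z}$: $$\text{maximize } c_1+c_2+\cdots+c_d-1$$ subject to $$0\le c_i\le nr\ \text{ for } i\in[d],\qquad \sum_{i\in S}c_i\le\sum_{\lambda\cap S\neq\emptyset}|N_\lambda|\ \text{ for all } S\subseteq[d].$$ Here the last sum ranges over the partitions $\lambda$ of $d$ of length at most $n$ having at least one part lying in $S$.
   Context: Work over $\mathbb{C}$. Let $[d]=\{1,\ldots,d\}$. The variety $\sigma_r(\mathcal{M}_{n,d})\subset\mathbb{P}^{\binom{n+d-1}{d}-1}$ is the Zariski closure of the image of $m_{i_1\cdots i_n}=\sum_{j=1}^r\mu^{(j)}_{1i_1}\cdots\mu^{(j)}_{ni_n}$ over all $(i_1,\ldots,i_n)\in\mathbb{Z}_{\ge0}^n$ with $\sum_k i_k=d$, with $\mu^{(j)}_{k0}=1$. For a partition $\lambda$ of $d$ with at most $n$ parts, $N_\lambda$ is the set of index vectors $(i_1,\ldots,i_n)\in\mathbb{Z}_{\ge 0}^n$ whose multiset of nonzero entries equals $\lambda$. *)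

(* Defs.v *)
From HB Require Import structures.
From mathcomp Require Import all_boot all_order all_algebra.
From mathcomp Require Import mpoly.
From Stdlib Require Import ClassicalDescription.
Set Implicit Arguments. Unset Strict Implicit. Unset Printing Implicit Defensive.
Import Order.TTheory GRing.Theory Num.Theory.
Local Open Scope ring_scope.

(* Index vectors (i_1,...,i_n) in Z_{>=0}^n with i_1+...+i_n = d.
   Entries are bounded by d, so they are encoded as 'I_n -> 'I_d.+1. *)
Definition idxvec (n d : nat) := {ffun 'I_n -> 'I_d.+1}.

Definition is_index (n d : nat) (a : idxvec n d) : bool :=
  (\sum_(k < n) (a k : nat) == d)%N.

Definition coords (n d : nat) : {set idxvec n d} := [set a | is_index a].

(* Parameters: x j k i stands for mu^{(j)}_{k i} (j in [r], k in [n], i in [0..d]);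
   the entry i = 0 is not used: mu^{(j)}_{k0} = 1. *)
Definition params (C : Type) (r n d : nat) := 'I_r -> 'I_n -> 'I_d.+1 -> C.

Definition mu (C : numClosedFieldType) r n d (x : params C r n d)
  (j : 'I_r) (k : 'I_n) (i : 'I_d.+1) : C :=
  if i == ord0 then 1 else x j k i.

Definition mcoord (C : numClosedFieldType) r n d (a : idxvec n d)
  (x : params C r n d) : C :=
  \sum_(j < r) \prod_(k < n) mu x j k (a k).

Definition alg_indep (C : numClosedFieldType) r n d (S : {set idxvec n d}) : Prop :=
  forall P : {mpoly C[#|S|]},
    (forall x : params C r n d,
        P.@[fun i : 'I_#|S| => mcoord (enum_val i) x] = 0) -> P = 0.

Definition alg_indepb (C : numClosedFieldType) r n d (S : {set idxvec n d}) : bool :=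
  if excluded_middle_informative (@alg_indep C r n d S) then true else false.

(* Dimension of the affine cone = transcendence degree over C of the field
   generated by the coordinate functions = maximal number of algebraically
   independent coordinates.  The projective dimension of sigma_r(M_{n,d})
   is one less (the image is a cone since d > 0). *)
Definition sigma_dim (C : numClosedFieldType) (n d r : nat) : int :=
  (\max_(S : {set idxvec n d} | (S \subset coords n d) && @alg_indepb C r n d S) #|S|)%:Z - 1.

(* Partitions of d with at most n parts, encoded as nonincreasing n-tuples
   (padded with zeros) of naturals summing to d; the parts are the nonzero entries. *)
Definition is_partition (n d : nat) (l : idxvec n d) : bool :=
  is_index l && [forall k : 'I_n, forall k' : 'I_n, (k <= k')%N ==> (l k' <= l k)%N].

Definition nonzero_entries (n d : nat) (a : idxvec n d) : seq nat :=
  [seq (a k : nat) | k <- enum 'I_n & (a k != ord0)].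

Definition Nset (n d : nat) (l : idxvec n d) : {set idxvec n d} :=
  [set a | perm_eq (nonzero_entries a) (nonzero_entries l)].

(* lambda has a part lying in S, where S is a subset of [d] and the
   ordinal i : 'I_d represents the element i+1 of [d]. *)
Definition meets (n d : nat) (l : idxvec n d) (S : {set 'I_d}) : bool :=
  [exists k : 'I_n, [exists i in S, (i : nat).+1 == l k]].

(* Feasibility for the ILP; c : 'I_d -> 'I_(n*r).+1 encodes 0 <= c_i <= nr. *)
Definition ilp_feasible (n d r : nat) (c : {ffun 'I_d -> 'I_(n * r).+1}) : bool :=
  [forall S : {set 'I_d},
     (\sum_(i in S) (c i : nat) <=
      \sum_(l : idxvec n d | is_partition l && meets l S) #|Nset l|)%N].

Definition ilp_opt (n d r : nat) : int :=
  (\max_(c : {ffun 'I_d -> 'I_(n * r).+1} | @ilp_feasible n d r c)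
      \sum_(i < d) (c i : nat))%:Z - 1.

(* Main.v *)
Require Import Defs.
From HB Require Import structures.
From mathcomp Require Import all_boot all_order all_algebra.
From mathcomp Require Import mpoly.
From mathcomp Require Import zify.
From Stdlib Require Import ClassicalDescription.
Set Implicit Arguments. Unset Strict Implicit. Unset Printing Implicit Defensive.
Import Order.TTheory GRing.Theory Num.Theory.

Section Hall.
Local Open Scope nat_scope.
Variables (A : finType) (d : nat) (V : A -> {set 'I_d}) (i0 : 'I_d).

Definition VU (U : {set A}) : {set 'I_d} := \bigcup_(a in U) V a.

Lemma VU_sub a (U : {set A}) : a \in U -> V a \subset VU U.
Proof. by move=> aU; apply: (bigcup_sup a). Qed.

Lemma VUU (X U : {set A}) : VU (X :|: U) = VU X :|: VU U.
Proof.
apply/setP=> i; rewrite in_setU; apply/bigcupP/orP.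
  by case=> a; rewrite in_setU => /orP[] aX iV; [left|right]; apply/bigcupP; exists a.
by case=> /bigcupP[a aX iV]; exists a; rewrite // in_setU ?aX ?orbT.
Qed.

Lemma sum_ind_le (S : {set 'I_d}) i : \sum_(j in S) ((j == i) : nat) <= 1.
Proof.
apply: leq_trans (_ : \sum_j ((j == i) : nat) <= 1).
  by rewrite big_mkcond; apply: leq_sum => j _; case: (j \in S).
by rewrite (bigD1 i) //= eqxx big1 // => j /negbTE ->.
Qed.

Lemma hall (kap : 'I_d -> nat) (T : {set A}) :
  (forall U : {set A}, U \subset T -> #|U| <= \sum_(i in VU U) kap i) ->
  exists g : A -> 'I_d, (forall a, a \in T -> g a \in V a) /\
     forall i, #|[set a in T | g a == i]| <= kap i.
Proof.
move: {2}#|T| (leqnn #|T|) => k; elim: k T kap => [|k IH] T kap.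
  rewrite leqn0 cards_eq0 => /eqP -> _; exists (fun _ => i0); split=> [a|i]; first by rewrite inE.
  apply: (@leq_trans 0) => //; rewrite leqn0 cards_eq0; apply/eqP/setP => a; by rewrite !inE.
move=> cT hyp.
case: (boolP [exists U : {set A}, [&& U != set0, U \proper T &
            #|U| == \sum_(i in VU U) kap i]]).
  case/existsP=> U /and3P[Un0 UT /eqP tight].
  have sUT : U \subset T by apply: proper_sub.
  have [g1 [g1V g1c]] : exists g : A -> 'I_d, (forall a, a \in U -> g a \in V a) /\
     forall i, #|[set a in U | g a == i]| <= kap i.
    apply: IH; last by move=> X XU; apply: hyp; apply: subset_trans XU sUT.
    by rewrite -ltnS; apply: leq_trans cT; apply: proper_card.
  pose kap' i := if i \in VU U then 0 else kap i.
  have [g2 [g2V g2c]] : exists g : A -> 'I_d, (forall a, a \in T :\: U -> g a \in V a) /\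
     forall i, #|[set a in T :\: U | g a == i]| <= kap' i.
    apply: IH.
      rewrite -ltnS; apply: leq_trans cT; rewrite cardsDS //.
      have := subset_leq_card sUT; rewrite -card_gt0 in Un0; move: Un0; lia.
    move=> X XTU.
    have XU : [disjoint X & U].
      by rewrite -setI_eq0; apply/eqP/setP=> a; rewrite !inE; apply/negP=> /andP[/(subsetP XTU)];
        rewrite !inE => /andP[/negbTE ->].
    have := hyp (X :|: U); rewrite subUset sUT andbT.
    have -> : X \subset T by apply: subset_trans XTU (subsetDl _ _).
    move/(_ isT); rewrite cardsU (_ : #|X :&: U| = 0); last by apply/eqP; rewrite cards_eq0 setI_eq0 XU.
    rewrite subn0 VUU (bigID (fun i => i \in VU U)) /=.
    have -> : \sum_(i in VU X :|: VU U | i \in VU U) kap i = \sum_(i in VU U) kap i.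
      by apply: eq_bigl => i; rewrite inE; case: (i \in VU U); rewrite ?orbT ?andbF.
    rewrite -tight addnC leq_add2l => H; apply: leq_trans H _.
    suff -> : \sum_(i in VU X) kap' i = \sum_(i in VU X :|: VU U | i \notin VU U) kap i by [].
    rewrite (bigID (fun i => i \in VU U)) /= big1 ?add0n; last first.
      by move=> i /andP[_]; rewrite /kap' => ->.
    apply: eq_big.
      by move=> i; rewrite inE; case: (i \in VU U); rewrite ?andbF ?orbF ?andbT.
    by move=> i /andP[_ /negbTE]; rewrite /kap' => ->.
  exists (fun a => if a \in U then g1 a else g2 a); split.
    move=> a aT; case: ifP => aU; first exact: g1V.
    by apply: g2V; rewrite inE aU aT.
  move=> i.
  have sub : [set a in T | (if a \in U then g1 a else g2 a) == i] \subset
     [set a in U | g1 a == i] :|: [set a in T :\: U | g2 a == i].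
    apply/subsetP=> a; rewrite !inE; case: (a \in U) => /=; first by case/andP=> _ ->.
    by [].
  apply: leq_trans (subset_leq_card sub) _; apply: leq_trans (leq_card_setU _ _) _.
  case: (boolP (i \in VU U)) => iU.
    have := g2c i; rewrite /kap' iU leqn0 => /eqP ->; rewrite addn0; exact: g1c.
  rewrite (_ : [set a in U | g1 a == i] = set0) ?cards0 ?add0n.
    by have := g2c i; rewrite /kap' (negbTE iU).
  apply/setP=> a; rewrite !inE; apply/negP=> /andP[aU /eqP gi].
  by move: iU; rewrite -gi; move/negP; apply; apply: (subsetP (VU_sub aU)); apply: g1V.
move/existsPn=> notight.
case: (set_0Vmem T) => [T0|[a aT]].
  exists (fun _ => i0); split=> [b|i]; first by rewrite T0 inE.
  apply: (@leq_trans 0) => //; rewrite leqn0 cards_eq0; apply/eqP/setP => b; by rewrite T0 !inE.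
have := hyp [set a]; rewrite sub1set aT cards1 => /(_ isT).
have VUa : VU [set a] = V a.
  by apply/setP=> j; apply/bigcupP/idP => [[b]|]; [rewrite inE => /eqP ->| exists a; rewrite ?inE].
rewrite VUa => pos.
have [i iV kpos] : exists2 i, i \in V a & 0 < kap i.
  apply/exists_inP; apply: contraLR pos; rewrite negb_exists_in => /forall_inP H.
  by rewrite -ltnNge ltnS leqn0 sum_nat_eq0; apply/forall_inP=> j /H; rewrite lt0n negbK.
pose kap' j := if j == i then (kap i).-1 else kap j.
have kapB j : kap j <= kap' j + (j == i).
  by rewrite /kap'; case: eqP => [->|]; rewrite ?addn1 ?prednK ?addn0.
have [g' [g'V g'c]] : exists g : A -> 'I_d, (forall b, b \in T :\ a -> g b \in V b) /\
     forall j, #|[set b in T :\ a | g b == j]| <= kap' j.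
  apply: IH; first by rewrite -ltnS; apply: leq_trans cT; rewrite (cardsD1 a T) aT.
  move=> X XT; case: (set_0Vmem X) => [->|[b bX]]; first by rewrite cards0.
  have XT' : X \proper T.
    apply/properP; split; first by apply: subset_trans XT (subsetDl _ _).
    exists a => //; apply/negP=> /(subsetP XT); rewrite !inE eqxx.
    by [].
  have X0 : 0 < #|X| by apply/card_gt0P; exists b.
  have := notight X; rewrite XT' -(cards_eq0 X) -lt0n X0.
  rewrite /= => nt.
  have lt : #|X| < \sum_(j in VU X) kap j.
    by rewrite ltn_neqAle nt; apply: hyp; apply: proper_sub.
  have : \sum_(j in VU X) kap j <= \sum_(j in VU X) kap' j + 1.
    have H1 : \sum_(j in VU X) kap j <= \sum_(j in VU X) (kap' j + (j == i)) by apply: leq_sum => j _; apply: kapB.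
    apply: leq_trans H1 _.
    by rewrite big_split /= leq_add2l sum_ind_le.
  by rewrite addn1 => H; rewrite -ltnS; apply: leq_trans lt H.
exists (fun b => if b == a then i else g' b); split.
  by move=> b bT; case: eqP => [->//|/eqP ba]; apply: g'V; rewrite !inE ba.
move=> j.
have sub : [set b in T | (if b == a then i else g' b) == j] \subset
   (if j == i then [set a] else set0) :|: [set b in T :\ a | g' b == j].
  apply/subsetP=> b; rewrite !inE; case: (eqVneq b a) => [->|ba] /=.
    by case/andP=> _ /eqP ->; rewrite eqxx inE eqxx.
  by case/andP=> -> ->; rewrite orbT.
apply: leq_trans (subset_leq_card sub) _; apply: leq_trans (leq_card_setU _ _) _.
have kapE : kap' j + (j == i) = kap j.
  by rewrite /kap'; case: eqP => [->|]; rewrite ?addn1 ?prednK ?addn0.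
rewrite -kapE addnC leq_add //.
by case: (j == i); rewrite ?cards1 ?cards0.
Qed.
End Hall.

Local Open Scope ring_scope.
Section Dep.
Variable C : fieldType.

Definition degle N (E : nat) (p : {mpoly C[N]}) :=
  all (fun mm : 'X_{1..N} => (mdeg mm <= E)%N) (msupp p).

Lemma degleP N E (p : {mpoly C[N]}) :
  reflect (forall mm, mm \in msupp p -> (mdeg mm <= E)%N) (degle E p).
Proof. exact: allP. Qed.

Lemma degle_mono N E1 E2 (p : {mpoly C[N]}) : (E1 <= E2)%N -> degle E1 p -> degle E2 p.
Proof. by move=> le /degleP H; apply/degleP=> mm /H /leq_trans; apply. Qed.

Lemma degleM N E1 E2 (p q : {mpoly C[N]}) :
  degle E1 p -> degle E2 q -> degle (E1 + E2) (p * q).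
Proof.
move=> /degleP hp /degleP hq; apply/degleP=> mm /msuppM_le /allpairsP[[m1 m2] /= [m1p m2q ->]].
by rewrite mdegD leq_add ?hp ?hq.
Qed.

Lemma degle1 N E : degle E (1 : {mpoly C[N]}).
Proof. by apply/degleP=> mm; rewrite msupp1 inE => /eqP ->; rewrite mdeg0. Qed.

Lemma degleD N E (p q : {mpoly C[N]}) : degle E p -> degle E q -> degle E (p + q).
Proof.
move=> /degleP hp /degleP hq; apply/degleP=> mm /msuppD_le; rewrite mem_cat => /orP[].
  exact: hp. exact: hq.
Qed.

Lemma degle0 N E : degle E (0 : {mpoly C[N]}).
Proof. by apply/degleP=> mm; rewrite msupp0. Qed.

Lemma degleX N (i : 'I_N) : degle 1 ('X_i : {mpoly C[N]}).
Proof. by apply/degleP=> mm; rewrite msuppX inE => /eqP ->; rewrite mdeg1. Qed.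

Lemma degle_sum N E (I : Type) (r : seq I) (P : pred I) (F : I -> {mpoly C[N]}) :
  (forall i, P i -> degle E (F i)) -> degle E (\sum_(i <- r | P i) F i).
Proof.
move=> H; elim/big_rec: _ => [|i p Pi hp]; first exact: degle0.
by apply: degleD => //; apply: H.
Qed.

Lemma degle_prod N (I : Type) (r : seq I) (P : pred I) (F : I -> {mpoly C[N]}) (E : I -> nat) :
  (forall i, P i -> degle (E i) (F i)) -> degle (\sum_(i <- r | P i) E i)%N (\prod_(i <- r | P i) F i).
Proof.
move=> H; elim/big_rec2: _ => [|i k p Pi hp]; first exact: degle1.
by apply: degleM => //; apply: H.
Qed.

Lemma degleXn N E k (p : {mpoly C[N]}) : degle E p -> degle (k * E) (p ^+ k).
Proof.
move=> hp; elim: k => [|k IH]; first by rewrite expr0 degle1.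
by rewrite exprS mulSn; apply: degleM.
Qed.

Lemma ker_nz R K (A : 'M[C]_(R, K)) : (K < R)%N -> exists u : 'rV_R, u != 0 /\ u *m A = 0.
Proof.
move=> lt.
have nf : ~~ row_free A.
  by rewrite -row_leq_rank -ltnNge; apply: leq_ltn_trans (rank_leq_col A) lt.
rewrite -kermx_eq0 in nf.
have [i ri] : exists i, row i (kermx A) != 0.
  apply/existsP; apply: contraR nf; rewrite negb_exists => /forallP H.
  by apply/eqP/row_matrixP=> i; rewrite row0; apply/eqP; rewrite -[_ == _]negbK H.
by exists (row i (kermx A)); split=> //; rewrite -row_mul mulmx_ker row0.
Qed.

Lemma leq_expl k a b : (a <= b)%N -> (a ^ k <= b ^ k)%N.
Proof. by move=> le; elim: k => // k IH; rewrite !expnS leq_mul. Qed.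

Lemma mdeg_ge N (mm : 'X_{1..N}) i : (mm i <= mdeg mm)%N.
Proof. by rewrite mdegE (bigD1 i) //= leq_addr. Qed.

Lemma dep m N e (W : {set 'I_m}) (h : 'I_m -> {mpoly C[N]}) :
  (forall i, i \in W -> degle e (h i)) -> (N < #|W|)%N ->
  exists P : {mpoly C[m]}, P != 0 /\
    forall (v : 'I_N -> C) (z : 'I_m -> C),
      (forall i, i \in W -> z i = (h i).@[v]) -> P.@[z] = 0.
Proof.
move=> hdeg ltNW.
set W' := #|W|.
pose D := ((W' * e + 1) ^ N + 1)%N.
pose B := (W' * D * e + 1)%N.
pose Tk := {ffun 'I_W' -> 'I_D}.
pose Ty := {ffun 'I_N -> 'I_B}.
have card_lt : (#|Ty| < #|Tk|)%N.
  rewrite !card_ffun !card_ord.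
  have D1 : (0 < D)%N by rewrite /D addn1.
  have Bs : (B <= D * (W' * e + 1))%N.
    rewrite /B mulnDr muln1 [(D * _)%N]mulnA [(D * W')%N]mulnC leq_add2l; exact: D1.
  apply: leq_ltn_trans (leq_expl N Bs) _.
  rewrite expnMn; apply: (@leq_trans (D ^ N * D)%N).
    rewrite ltn_pmul2l ?expn_gt0 ?D1 // /D; lia.
  by rewrite -expnSr; apply: leq_pexp2l.
pose Q (k : Tk) : {mpoly C[N]} := \prod_(w : 'I_W') h (enum_val w) ^+ k w.
pose tmon (c : Ty) : 'X_{1..N} := [multinom (c i : nat) | i < N].
have tmon_inj : injective tmon.
  move=> c1 c2 /mnmP H; apply/ffunP=> i; apply/val_inj; have := H i; by rewrite !mnmE.
have Qdeg k : degle (W' * D * e) (Q k).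
  rewrite /Q; apply: (degle_mono _ (degle_prod _ (E := fun w : 'I_W' => (k w * e)%N) _)); last first.
    by move=> w _; apply: degleXn; apply: hdeg; apply: enum_valP.
  apply: leq_trans (_ : \sum_(w < W') (D * e) <= _)%N.
    by apply: leq_sum => w _; rewrite leq_mul2r ltnW ?orbT.
  by rewrite sum_nat_const card_ord mulnA.
have Qexp k : Q k = \sum_(c < #|Ty|) (Q k)@_(tmon (enum_val c)) *: 'X_[tmon (enum_val c)].
  apply/mpolyP => mm; rewrite raddf_sum.
  under eq_bigr => c _ do rewrite /= mcoeffZ mcoeffX.
  case: (boolP [exists c : Ty, tmon c == mm]).
    case/existsP => c0 /eqP <-.
    rewrite (bigD1 (enum_rank c0)) //= enum_rankK eqxx mulr1 big1 ?addr0 // => c ne.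
    rewrite (inj_eq tmon_inj).
    have -> : (enum_val c == c0) = false.
      by apply/negbTE; apply: contraNneq ne => <-; rewrite enum_valK.
    by rewrite mulr0.
  move/existsPn => H; rewrite big1; last by move=> c _; rewrite (negbTE (H _)) mulr0.
  apply/eqP; rewrite mcoeff_eq0; apply/negP => mmQ.
  have dg := degleP _ _ (Qdeg k) mm mmQ.
  have ltB i : (mm i < B)%N by apply: leq_ltn_trans (mdeg_ge mm i) _; rewrite /B addn1 ltnS.
  have := H [ffun i => Ordinal (ltB i)]; apply/negP; rewrite negbK; apply/eqP/mnmP => i.
  by rewrite mnmE ffunE.
pose A := \matrix_(r < #|Tk|, c < #|Ty|) (Q (enum_val r))@_(tmon (enum_val c)).
have [u [unz uA]] := ker_nz A card_lt.
pose M (k : Tk) : 'X_{1..m} := (\sum_(w < W') U_(enum_val w) *+ k w)%MM.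
have ME k w : M k (enum_val w) = k w.
  rewrite /M mnm_sumE (bigD1 w) //= mulmnE mnm1E eqxx mul1n big1 ?addn0 // => w' ne.
  by rewrite mulmnE mnm1E (inj_eq enum_val_inj) (negbTE ne).
have M_inj : injective M.
  by move=> k1 k2 E; apply/ffunP=> w; apply/val_inj => /=; rewrite -!ME E.
have smonE (k : Tk) : \prod_(w < W') ('X_(enum_val w) : {mpoly C[m]}) ^+ k w = 'X_[M k].
  rewrite /M; elim/big_rec2: _ => [|w p mm _ ->]; first by rewrite mpolyX0.
  by rewrite mpolyXD mpolyXn.
exists (\sum_(r < #|Tk|) u 0 r *: 'X_[M (enum_val r)]).
split.
  have [r0 ur0] : exists r0, u 0 r0 != 0.
    apply/existsP; apply: contraR unz => /existsPn H; apply/eqP/rowP => r.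
    by rewrite mxE; apply/eqP; move: (H r); rewrite negbK.
  apply/negP => /eqP P0; move: ur0; have := congr1 (mcoeff (M (enum_val r0))) P0.
  rewrite mcoeff0 raddf_sum /=.
  under eq_bigr => r _ do rewrite /= mcoeffZ mcoeffX.
  rewrite (bigD1 r0) //= eqxx mulr1 big1 ?addr0; first by move=> ->; rewrite eqxx.
  move=> r ne.
  by rewrite (inj_eq M_inj) (inj_eq enum_val_inj) (negbTE ne) mulr0.
move=> v z hz.
rewrite raddf_sum /=.
transitivity (\sum_(r < #|Tk|) u 0 r * (Q (enum_val r)).@[v]).
  apply: eq_bigr => r _; rewrite mevalZ -smonE rmorph_prod /=; congr (_ * _).
  rewrite /Q rmorph_prod; apply: eq_bigr => w _; rewrite !rmorphXn /= mevalXU hz //.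
  exact: enum_valP.
under eq_bigr => r _ do rewrite Qexp raddf_sum mulr_sumr.
rewrite exchange_big /= big1 // => c _.
have := congr1 (fun X : 'M[C]_(1, #|Ty|) => X 0 c) uA; rewrite !mxE => e0.
transitivity ((\sum_j u 0 j * A j c) * ('X_[tmon (enum_val c)]).@[v]); last by rewrite e0 mul0r.
rewrite mulr_suml.
by apply: eq_bigr => r _; rewrite /= mevalZ mxE mulrA.
Qed.
End Dep.

Section Sort.
Local Open Scope nat_scope.
Variables n d : nat.

Definition entries (a : idxvec n d) : seq nat := [seq (a k : nat) | k <- enum 'I_n].

Lemma nonzero_entriesE (a : idxvec n d) :
  nonzero_entries a = [seq v <- entries a | v != 0].
Proof.
rewrite /nonzero_entries /entries [RHS]filter_map; congr (map _ _); apply: eq_filter => k /=; by [].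

Qed.

Lemma meetsE (a : idxvec n d) S :
  meets a S = has (fun v => [exists i in S, (i : nat).+1 == v]) (nonzero_entries a).
Proof.
apply/existsP/hasP.
  case=> k /existsP[i /andP[iS /eqP ik]]; exists (a k : nat).
    by rewrite nonzero_entriesE mem_filter -ik /= /entries ik; apply: map_f; rewrite mem_enum.
  by apply/existsP; exists i; rewrite iS ik eqxx.
case=> v; rewrite nonzero_entriesE mem_filter => /andP[_ /mapP[k _ ->]].
by case/existsP=> i /andP[iS /eqP ik]; exists k; apply/existsP; exists i; rewrite iS ik eqxx.
Qed.

Definition sortl (a : idxvec n d) : idxvec n d :=
  [ffun k : 'I_n => inord (nth 0 (sort geq (entries a)) k)].

Lemma nth_bound (a : idxvec n d) i : nth 0 (sort geq (entries a)) i < d.+1.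
Proof.
case: (ltnP i (size (sort geq (entries a)))) => lt; last by rewrite nth_default.
have : nth 0 (sort geq (entries a)) i \in entries a by rewrite -(mem_sort geq) mem_nth.
by case/mapP=> k _ ->.
Qed.

Lemma sortl_entries a : entries (sortl a) = sort geq (entries a).
Proof.
have sz : size (sort geq (entries a)) = n by rewrite size_sort size_map size_enum_ord.
apply: (@eq_from_nth _ 0); first by rewrite size_map size_enum_ord sz.
move=> i; rewrite size_map size_enum_ord => lt.
rewrite (nth_map (Ordinal lt)) ?size_enum_ord // ffunE nth_enum_ord // inordK //.
have : nth 0 (sort geq (entries a)) i \in entries a.
  by rewrite -(mem_sort geq) mem_nth // sz.
by case/mapP=> k _ ->; rewrite ltnS -ltnS ltn_ord.
Qed.

Lemma perm_sortl a : perm_eq (nonzero_entries a) (nonzero_entries (sortl a)).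
Proof.
by rewrite !nonzero_entriesE sortl_entries; apply: perm_filter; rewrite perm_sym perm_sort.
Qed.

Lemma sum_entries (a : idxvec n d) : \sum_(k < n) (a k : nat) = sumn (entries a).
Proof. by rewrite /entries sumnE big_map big_enum. Qed.

Lemma sortl_partition a : is_index a -> is_partition (sortl a).
Proof.
rewrite /is_partition /is_index !sum_entries sortl_entries => sa.
apply/andP; split; first by rewrite (perm_sumn (permEl (perm_sort geq _))).
apply/forallP => k; apply/forallP => k'; apply/implyP => le.
have sz : size (sort geq (entries a)) = n by rewrite size_sort size_map size_enum_ord.
have tr : transitive geq by move=> x y z h1 h2; apply: leq_trans h2 h1.
have := sorted_leq_nth tr (fun x => leqnn x) 0 (sort_sorted (fun x y => leq_total y x) (entries a)) k k'.
rewrite !inE sz !ltn_ord => /(_ isT isT le).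
by rewrite !ffunE !inordK ?nth_bound.
Qed.
End Sort.

Local Close Scope ring_scope.
Section Glue.
Variables (C : numClosedFieldType) (n d r : nat).
Local Open Scope ring_scope.

Definition Vof (a : idxvec n d) : {set 'I_d} := [set i : 'I_d | [exists k, (i : nat).+1 == a k]].

Lemma indep_bound (T U : {set idxvec n d}) : @alg_indep C r n d T -> U \subset T ->
  (#|U| <= n * r * #|VU Vof U|)%N.
Proof.
move=> ind UT; rewrite leqNgt; apply/negP => lt.
set Vs := VU Vof U.
pose Pt := ('I_r * 'I_n * 'I_d)%type.
pose Yt := {p : Pt | p.2 \in Vs}.
have cardY : #|{: Yt}| = (n * r * #|Vs|)%N.
  rewrite card_sig.
  have -> : #|[pred p : Pt | p.2 \in Vs]| = #|setX [set: 'I_r * 'I_n] Vs|.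
    by apply: eq_card => p; rewrite !inE; case: p.
  by rewrite cardsX cardsT card_prod !card_ord [(r * n)%N]mulnC.
pose var (j : 'I_r) (k : 'I_n) (i : 'I_d) : {mpoly C[#|{: Yt}|]} :=
  if (insub ((j, k, i) : Pt) : option Yt) is Some q then 'X_(enum_rank q) else 0%R.
pose hpol (a : idxvec n d) : {mpoly C[#|{: Yt}|]} :=
  \sum_(j < r) \prod_(k < n) (if unlift ord0 (a k) is Some i then var j k i else 1%R).
pose h (t : 'I_#|T|) := hpol (enum_val t).
pose W := [set t : 'I_#|T| | enum_val t \in U].
have cardW : #|W| = #|U|.
  rewrite -(card_imset _ enum_val_inj); apply: eq_card => a.
  apply/imsetP/idP => [[t]|aU]; first by rewrite inE => tU ->.
  have aT : a \in T by apply: (subsetP UT).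
  by exists (enum_rank_in aT a); rewrite ?inE enum_rankK_in.
have hdeg : forall t, t \in W -> degle n (h t).
  move=> t _; rewrite /h /hpol; apply: degle_sum => j _.
  apply: (degle_mono _ (degle_prod _ (E := fun _ => 1%N) _)).
    by rewrite sum_nat_const card_ord muln1.
  move=> k _; case: (unlift ord0 _) => [i|]; last exact: degle1.
  by rewrite /var; case: insub => [q|]; [exact: degleX | exact: degle0].
have ltW : (#|{: Yt}| < #|W|)%N by rewrite cardY cardW.
have [P [Pnz Pz]] := dep hdeg ltW.
move/negP: Pnz; apply; apply/eqP; apply: ind => x.
pose yv : 'I_#|{: Yt}| -> C := fun t => let p := val (enum_val t) in x p.1.1 p.1.2 (lift ord0 p.2).
apply: (Pz yv) => t tW.
have tU : enum_val t \in U by move: tW; rewrite inE.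
rewrite /mcoord /h /hpol raddf_sum /=; apply: eq_bigr => j _; rewrite rmorph_prod /=.
apply: eq_bigr => k _.
rewrite /mu; case: (unliftP ord0 (enum_val t k)) => [i eq|->]; last by rewrite eqxx rmorph1.
have -> : (enum_val t k == ord0) = false by rewrite eq eq_sym (negbTE (neq_lift _ _)).
have iV : ((j, k, i) : Pt).2 \in Vs.
  apply: (subsetP (VU_sub Vof tU)); rewrite inE; apply/existsP; exists k; rewrite eq lift0.
  by [].
rewrite /var (insubT (fun p : Pt => p.2 \in Vs) iV) /= mevalXU /yv enum_rankK /= eq.
by [].
Qed.


Lemma meets_of (a : idxvec n d) (S : {set 'I_d}) i : i \in Vof a -> i \in S -> meets a S.
Proof.
rewrite inE => /existsP[k ik] iS; apply/existsP; exists k; apply/existsP; exists i.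
by rewrite iS.
Qed.

Lemma ilp_witness (T : {set idxvec n d}) : (0 < d)%N -> T \subset coords n d ->
  @alg_indep C r n d T ->
  exists c : {ffun 'I_d -> 'I_(n * r).+1}, ilp_feasible c && (\sum_(i < d) (c i : nat) == #|T|)%N.
Proof.
move=> d0 Tc ind.
have hyp : forall U : {set idxvec n d}, U \subset T ->
    (#|U| <= \sum_(i in VU Vof U) (n * r))%N.
  by move=> U UT; rewrite sum_nat_const mulnC; exact: indep_bound ind UT.
have [g [gV gc]] := @hall _ _ Vof (Ordinal d0) (fun _ => (n * r)%N) T hyp.
pose c := [ffun i => Ordinal (gc i : (_ < (n * r).+1)%N)].
have fib : forall (Pr : pred 'I_d),
    (\sum_(i | Pr i) #|[set a in T | g a == i]| = #|[set a in T | Pr (g a)]|)%N.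
  move=> Pr; rewrite -sum1_card (partition_big g Pr) /=; last by move=> a; rewrite inE => /andP[].
  apply: eq_bigr => i Pri; rewrite -sum1_card; apply: eq_bigl => a; rewrite !inE.
  by case: eqP => [->|_]; rewrite ?Pri ?andbT ?andbF.
have cE i : (c i : nat) = #|[set a in T | g a == i]| by rewrite ffunE.
exists c; apply/andP; split; last first.
  rewrite (eq_bigr _ (fun i _ => cE i)) (fib xpredT) /=; apply/eqP; apply: eq_card => a.
  by rewrite !inE andbT.
apply/forallP => S.
rewrite (eq_bigr _ (fun i _ => cE i)) (fib (fun i => i \in S)).
apply: (@leq_trans #|[set a in coords n d | meets a S]|).
  apply: subset_leq_card; apply/subsetP => a; rewrite !inE => /andP[aT gS].
  have := subsetP Tc a aT; rewrite inE => ->.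
  exact: meets_of (gV a aT) gS.
rewrite -sum1_card (partition_big (@sortl n d) (fun l => is_partition l && meets l S)) /=; last first.
  move=> a; rewrite !inE => /andP[ai ma]; rewrite sortl_partition //=.
  by rewrite meetsE -(perm_has _ (perm_sortl a)) -meetsE.
apply: leq_sum => l _.
apply: (@leq_trans (\sum_(a in Nset l) 1)%N); last by rewrite sum1_card.
rewrite big_mkcond [X in (_ <= X)%N]big_mkcond /=; apply: leq_sum => a _.
case: ifP => // /andP[_ /eqP <-]; by rewrite inE perm_sortl.
Qed.

End Glue.

Local Open Scope ring_scope.

Theorem theorem5p3 (C : numClosedFieldType) (n d r : nat) :
  (0 < n)%N -> (0 < d)%N -> (0 < r)%N ->
  sigma_dim C n d r <= ilp_opt n d r.
Proof.
move=> _ d0 _; rewrite /sigma_dim /ilp_opt lerD2r lez_nat.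
apply/bigmax_leqP => T /andP[Tc]; rewrite /alg_indepb.
case: excluded_middle_informative => // ind _.
have [c /andP[fc /eqP sc]] := ilp_witness d0 Tc ind.
by rewrite -sc; apply: (leq_bigmax_cond c fc).
Qed.
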